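(* For every even positive integer $n$, there exist a binary NFA with $n$ states and a binary DFA with $n$ states such that there is a tower of height $n^2-n+1$ between their languages and there is no infinite tower between their languages.
   Context: Binary means over a two-letter alphabet. For strings $v=a_1\cdots a_k$ and $w$, $v\preccurlyeq w$ if $w\in\Sigma^*a_1\Sigma^*a_2\Sigma^*\cdots\Sigma^*a_k\Sigma^*$. A sequence $(w_i)_{i=1}^r$ of strings is a tower between languages $K$ and $L$ if $w_1\in K\cup L$ and for all $i=1,\dots,r-1$: $w_i\preccurlyeq w_{i+1}$, $w_i\in K$ implies $w_{i+1}\in L$, and $w_i\in L$ implies $w_{i+1}\in K$; $r$ is its height. An infinite tower is an infinite sequence with the same properties. *)

(* Defs.v *)
From mathcomp Require Import all_boot.
Set Implicit Arguments. Unset Strict Implicit. Unset Printing Implicit Defensive.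

Definition lang := seq bool -> Prop.

(* The subsequence (scattered subword) order v ≼ w is mathcomp's [subseq v w]. *)

Record nfa (n : nat) := NFA {
  nfa_init : {set 'I_n};
  nfa_final : {set 'I_n};
  nfa_trans : 'I_n -> bool -> {set 'I_n} }.

Definition nfa_reach n (A : nfa n) (w : seq bool) : {set 'I_n} :=
  foldl (fun (S : {set 'I_n}) (a : bool) => \bigcup_(q in S) nfa_trans A q a) (nfa_init A) w.

Definition nfa_lang n (A : nfa n) : lang :=
  fun w => [exists q, (q \in nfa_reach A w) && (q \in nfa_final A)].

Record dfa (n : nat) := DFA {
  dfa_init : 'I_n;
  dfa_final : {set 'I_n};
  dfa_trans : 'I_n -> bool -> 'I_n }.

Definition dfa_lang n (B : dfa n) : lang :=
  fun w => foldl (dfa_trans B) (dfa_init B) w \in dfa_final B.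

(* A finite tower (w_1,...,w_r) between K and L, represented by the list ws;
   its height is size ws (r >= 1). Index i below is 0-based. *)
Definition tower (K L : lang) (ws : seq (seq bool)) : Prop :=
  ws <> [::] /\
  (K (nth [::] ws 0) \/ L (nth [::] ws 0)) /\
  forall i, i.+1 < size ws ->
    [/\ subseq (nth [::] ws i) (nth [::] ws i.+1),
        K (nth [::] ws i) -> L (nth [::] ws i.+1) &
        L (nth [::] ws i) -> K (nth [::] ws i.+1)].

Definition inf_tower (K L : lang) (w : nat -> seq bool) : Prop :=
  (K (w 0) \/ L (w 0)) /\
  forall i,
    [/\ subseq (w i) (w i.+1),
        K (w i) -> L (w i.+1) &
        L (w i) -> K (w i.+1)].

(* Main.v *)
Require Import Defs.
From mathcomp Require Import all_boot.
From mathcomp Require Import zify.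
Set Implicit Arguments. Unset Strict Implicit. Unset Printing Implicit Defensive.

Definition lastrun (w : seq bool) := index true (rev w).
Definition cntb (w : seq bool) := count_mem true w.

Lemma lastrun_rcons w x : lastrun (rcons w x) = if x then 0 else (lastrun w).+1.
Proof. by rewrite /lastrun rev_rcons /=; case: x. Qed.

Lemma cntb_rcons w x : cntb (rcons w x) = cntb w + x.
Proof. by rewrite /cntb -cats1 count_cat /=; case: x. Qed.

Definition Bd (m : nat) : dfa m.+1 :=
  DFA ord0 [set q : 'I_m.+1 | ~~ odd q]
      (fun (q : 'I_m.+1) (x : bool) => if x then ord0 else inord (minn q.+1 m)).

Lemma Bd_run m w : nat_of_ord (foldl (dfa_trans (Bd m)) (dfa_init (Bd m)) w) = minn (lastrun w) m.
Proof.
elim/last_ind: w => [|w x IH]; first by rewrite /= /lastrun /=; lia.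
rewrite foldl_rcons lastrun_rcons /=; case: x => //=.
- lia.
rewrite inordK IH; lia.
Qed.

Lemma Bd_lang m w : odd m -> dfa_lang (Bd m) w <-> (lastrun w < m /\ ~~ odd (lastrun w)).
Proof.
move=> om; rewrite /dfa_lang in_set Bd_run /minn.
case: ltnP => h.
- by split=> [->|[]].
- rewrite om; split=> //; case=> h2; lia.
Qed.

Definition An (m : nat) : nfa m.+1 :=
  NFA [set q : 'I_m.+1 | (nat_of_ord q == 0) || (nat_of_ord q == m.-1)]
      [set q : 'I_m.+1 | nat_of_ord q == m]
      (fun (q : 'I_m.+1) (x : bool) =>
         if x then (if q < m.-1 then [set r : 'I_m.+1 | (nat_of_ord r == q.+1) || (nat_of_ord r == m.-1)] else set0)
         else (if q < m.-1 then [set q]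
               else [set r : 'I_m.+1 | nat_of_ord r == (if nat_of_ord q == m.-1 then m else m.-1)])).

Lemma An_reach m w (r : 'I_m.+1) : 0 < m ->
  (r \in nfa_reach (An m) w) =
  ((nat_of_ord r == cntb w) && (cntb w < m.-1)) ||
  ((cntb w <= m.-1) && (nat_of_ord r == m.-1 + odd (lastrun w))).
Proof.
move=> m0; elim/last_ind: w r => [|w x IH] r.
  rewrite /nfa_reach /= in_set /cntb /lastrun /= addn0.
  case: (nat_of_ord r) => [|k]; case: (m.-1) => [|j] //=.
rewrite /nfa_reach foldl_rcons -/(nfa_reach (An m) w) cntb_rcons lastrun_rcons.
apply/bigcupP/idP.
- case=> q; rewrite IH /= => Hq.
  case: x => /=; rewrite ?addn1 ?addn0.
  + case: ifP => hq; last by rewrite in_set0.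
    rewrite in_set => /orP [] /eqP ->; move: Hq hq; case: (odd (lastrun w)); lia.
  + case: ifP => hq.
    * rewrite in_set1 => /eqP ->; move: Hq hq; case: (odd (lastrun w)); lia.
    * rewrite in_set => /eqP ->; move: Hq hq; case: ifP => /eqP h2; case: (odd (lastrun w)); lia.
- case: x; rewrite /= ?addn1 ?addn0 => H.
  + have hk : cntb w < m.-1 by move: H; lia.
    exists (inord (cntb w)).
      by rewrite IH inordK /=; lia.
    by rewrite inordK ?ifT; try lia; rewrite in_set; move: H; lia.
  + move: H => /orP [/andP [/eqP hr hk] | /andP [hk /eqP hr]].
    * exists r; first by rewrite IH hr; lia.
      by rewrite ifT ?in_set1 //; lia.
    * exists (inord (m.-1 + odd (lastrun w))).
        by rewrite IH inordK; case: (odd (lastrun w)); lia.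
      rewrite inordK; last by case: (odd (lastrun w)); lia.
      rewrite ifF; last by case: (odd (lastrun w)); lia.
      rewrite in_set hr /=; case: (odd (lastrun w)) => /=; case: ifP => /eqP; lia.
Qed.

Lemma An_lang m w : 0 < m -> nfa_lang (An m) w <-> (cntb w <= m.-1 /\ odd (lastrun w)).
Proof.
move=> m0; rewrite /nfa_lang; split.
- case/existsP=> q /andP [Hq Hf]; move: Hq; rewrite An_reach //; move: Hf; rewrite /= in_set.
  case: (odd (lastrun w)); lia.
- case=> h1 h2; apply/existsP; exists ord_max; rewrite An_reach // /= in_set /=.
  by rewrite h2; apply/andP; split=> //; lia.
Qed.

Lemma index_mono (s t : seq bool) : subseq s t -> count_mem true s = count_mem true t ->
  index true s <= index true t.
Proof.
elim: t s => [|y t IH] [|x s] //=.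
case: eqP => [<-|hxy].
- case: x => //= hs; rewrite !add0n => hc; exact: IH.
- move=> hs; case: y hxy => /= hxy.
  + have := leq_count_subseq (pred1 true) hs; rewrite /= => h1 h2; move: h1; rewrite h2 /=; lia.
  + rewrite add0n => hc; apply: leq_trans (IH _ hs hc) _; exact: leqnSn.
Qed.

Lemma lastrun_mono u v : subseq u v -> cntb u = cntb v -> lastrun u <= lastrun v.
Proof.
move=> h hc; apply: index_mono; first by rewrite subseq_rev.
by rewrite !count_rev.
Qed.

Lemma cntb_mono u v : subseq u v -> cntb u <= cntb v.
Proof. exact: leq_count_subseq. Qed.

Lemma no_inf m : 0 < m -> odd m ->
  ~ (exists w : nat -> seq bool, inf_tower (nfa_lang (An m)) (dfa_lang (Bd m)) w).
Proof.
move=> m0 om [w [H0 Hs]].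
have Hin : forall i, nfa_lang (An m) (w i) \/ dfa_lang (Bd m) (w i).
  elim=> [//|i [h|h]]; case: (Hs i) => _ h1 h2; [right; exact: h1 | left; exact: h2].
have Hc : forall i, cntb (w i) <= m.-1.
  move=> i; case: (Hin i) => h; first by case: (An_lang (w i) m0) => /(_ h) [].
  case: (Hs i) => hs _ h2; have := h2 h; case/(An_lang _ m0) => h3 _.
  exact: leq_trans (cntb_mono hs) h3.
pose Phi i := cntb (w i) * m.+1 + minn (lastrun (w i)) m.
have Hstep : forall i, Phi i < Phi i.+1.
  move=> i; rewrite /Phi; case: (Hs i) => hs hK hL.
  have hc := cntb_mono hs.
  case: (ltnP (cntb (w i)) (cntb (w i.+1))) => hlt.
    have : cntb (w i) * m.+1 + m.+1 <= cntb (w i.+1) * m.+1.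
      by rewrite addnC -mulSn leq_mul2r hlt orbT.
    generalize (cntb (w i) * m.+1) (cntb (w i.+1) * m.+1) => A B.
    rewrite /minn; case: (ltnP (lastrun (w i)) m); case: (ltnP (lastrun (w i.+1)) m); lia.
  have he : cntb (w i) = cntb (w i.+1) by apply/eqP; rewrite eqn_leq hc hlt.
  have hl := lastrun_mono hs he.
  rewrite he; case: (Hin i) => h.
  - have [_ o1] := (An_lang (w i) m0).1 h.
    have [l2 o2] := (Bd_lang (w i.+1) om).1 (hK h).
    have hne : lastrun (w i) != lastrun (w i.+1).
      by apply/eqP => E; move: o2; rewrite -E o1.
    rewrite /minn; case: (ltnP (lastrun (w i)) m); case: (ltnP (lastrun (w i.+1)) m); lia.
  - have [l1 o1] := (Bd_lang (w i) om).1 h.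
    have [_ o2] := (An_lang (w i.+1) m0).1 (hL h).
    have hne : lastrun (w i) != lastrun (w i.+1).
      by apply/eqP => E; move: o2; rewrite -E (negbTE o1).
    rewrite /minn; case: (ltnP (lastrun (w i)) m); case: (ltnP (lastrun (w i.+1)) m); lia.
have Hge : forall i, i <= Phi i.
  elim=> [|i IH]; first exact: leq0n.
  exact: leq_ltn_trans IH (Hstep i).
have Hle : forall i, Phi i <= m.-1 * m.+1 + m.
  move=> i; rewrite /Phi; apply: leq_add; first by rewrite leq_mul2r Hc orbT.
  exact: geq_minr.
have := leq_trans (Hge (m.-1 * m.+1 + m).+1) (Hle _); lia.
Qed.

Definition Tw (m : nat) : seq bool := mkseq (fun i => i %% m.+1 == m) (m * m.+1).

Lemma take_Tw m i : i <= m * m.+1 ->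
  exists q r, [/\ i = q * m.+1 + r, r <= m, cntb (take i (Tw m)) = q & lastrun (take i (Tw m)) = r].
Proof.
elim: i => [|i IH] hi.
  by exists 0, 0; rewrite take0 /cntb /lastrun.
have [q [r [hi' hr hc hl]]] := IH (ltnW hi).
have hs : i < size (Tw m) by rewrite size_mkseq.
rewrite (take_nth false hs) cntb_rcons lastrun_rcons nth_mkseq; last by rewrite -(size_mkseq (fun i => i %% m.+1 == m) (m * m.+1)).
have hmod : i %% m.+1 = r by rewrite hi' modnMDl modn_small.
rewrite hmod hc hl.
case: eqP => [hrm|hrm].
- exists q.+1, 0; split=> //; [rewrite hi' hrm mulSn; lia | lia].
- exists q, r.+1; split=> //; [lia | lia | lia].
Qed.

Lemma Tw_lang m i : 0 < m -> odd m -> i <= m * m.+1 ->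
  (nfa_lang (An m) (take i (Tw m)) <-> odd i) /\ (dfa_lang (Bd m) (take i (Tw m)) <-> ~~ odd i).
Proof.
move=> m0 om hi.
have [q [r [hi' hr hc hl]]] := take_Tw hi.
have hodd : odd i = odd r by rewrite hi' oddD oddM /= om andbF.
split.
- rewrite An_lang // hc hl hodd; split; first by case.
  move=> or; split=> //.
  have r1 : 0 < r by case: r or {hi' hr hl hodd}.
  have : q * m.+1 < m * m.+1 by lia.
  rewrite ltn_mul2r /=; lia.
- rewrite Bd_lang // hl hodd; split; first by case.
  move=> er; split=> //; rewrite ltn_neqAle hr andbT.
  by apply/eqP=> E; move: er; rewrite E om.
Qed.

Theorem theorem8 (n : nat) (n_pos : 0 < n) (n_even : ~~ odd n) :
  exists (A : nfa n) (B : dfa n),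
    (exists ws : seq (seq bool),
        tower (nfa_lang A) (dfa_lang B) ws /\ size ws = n ^ 2 - n + 1) /\
    ~ (exists w : nat -> seq bool, inf_tower (nfa_lang A) (dfa_lang B) w).
Proof.
case: n n_pos n_even => [//|m] _ /= om.
rewrite negbK in om.
have m0 : 0 < m by case: m om.
exists (An m), (Bd m); split; last exact: no_inf.
exists (mkseq (fun i => take i (Tw m)) (m * m.+1).+1); split; last first.
  rewrite size_mkseq; have -> : m.+1 ^ 2 = m.+1 * m.+1 by rewrite expnS expn1.
  rewrite mulnS; lia.
split; first by [].
split.
  have [_ h] := @Tw_lang m 0 m0 om (leq0n _).
  by rewrite nth_mkseq //; right; apply/h.
move=> i; rewrite size_mkseq => hi.
rewrite !nth_mkseq //; last exact: ltnW.
have hs : i < size (Tw m) by rewrite size_mkseq.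
have [hK hL] := @Tw_lang m i m0 om (ltnW hi).
have [hK' hL'] := @Tw_lang m i.+1 m0 om hi.
split.
- by rewrite (take_nth false hs) subseq_rcons.
- by move/hK=> oi; apply/hL'; rewrite /= oi.
- by move/hL=> oi; apply/hK'; rewrite /= oi.
Qed.
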